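(* Let $T=2^m$, $d\ge1$, $u_{1:T}\in(\mathbb{R}^d)^T$, $\bar u=\frac1T\sum_{t=1}^Tu_t$, and $\bar S=\sum_{t=1}^T\|u_t-\bar u\|_2$. Then for every scale $j^*\in[1:m]$, $\bar S^{(j^* )}\le\bar S$, where $\bar S^{(j^* )}$ is defined in the context.
   Context: Haar features for $T=2^m$: for scale $j\in[1:m]$ and location $l\in[1:2^{-j}T]$, $h^{(j,l)}\in\mathbb{R}^T$ has $t$-th entry $1$ for $t\in[2^j(l-1)+1:2^j(l-1)+2^{j-1}]$, $-1$ for $t\in[2^j(l-1)+2^{j-1}+1:2^jl]$, and $0$ otherwise; normalized $\tilde h^{(j,l)}=2^{-j/2}h^{(j,l)}$. For $i\in[1:d]$, $u^{(i)}_{1:T}\in\mathbb{R}^T$ is the sequence of $i$-th coordinates of $u_1,\ldots,u_T$. Coefficient $\hat u^{(j,l)}\in\mathbb{R}^d$ has $i$-th entry $\langle\tilde h^{(j,l)},u^{(i)}_{1:T}\rangle$. Detail sequences: $z^{(j,l)}_t=\hat u^{(j,l)}\tilde h^{(j,l)}_t$, $z^{(j)}=\sum_l z^{(j,l)}$, and $\bar S^{(j)}=\sum_{t=1}^T\|z^{(j)}_t\|_2$. *)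

(* Defs.v *)
(* the statement is algebraic, stated over any real closed field R
   (the reals are one instance). Indices are 0-based: t : 'I_(2^m) stands for t+1,
   Haar location l (0-based) stands for l+1. *)
From HB Require Import structures.
From mathcomp Require Import all_boot all_order all_algebra.
Set Implicit Arguments. Unset Strict Implicit. Unset Printing Implicit Defensive.
Import Order.TTheory GRing.Theory Num.Theory.
Local Open Scope ring_scope.

Definition norm2 {R : rcfType} {d : nat} (x : 'I_d -> R) : R :=
  Num.sqrt (\sum_(i < d) x i ^+ 2).

(* Unnormalized Haar feature h^{(j,l+1)} evaluated at time t+1 (0-based l, t):
   1 on [2^j l, 2^j l + 2^(j-1)), -1 on [2^j l + 2^(j-1), 2^j (l+1)), 0 otherwise. *)
Definition haar {R : rcfType} (j l t : nat) : R :=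
  if ((2 ^ j * l <= t) && (t < 2 ^ j * l + 2 ^ j.-1))%N then 1
  else if ((2 ^ j * l + 2 ^ j.-1 <= t) && (t < 2 ^ j * l.+1))%N then -1
  else 0.

Definition haarn {R : rcfType} (j l t : nat) : R :=
  haar j l t / Num.sqrt (2 ^+ j).

Definition haar_coef {R : rcfType} (m d : nat) (u : 'I_(2 ^ m) -> 'I_d -> R)
  (j l : nat) (i : 'I_d) : R :=
  \sum_(t < 2 ^ m) haarn j l t * u t i.

Definition detail {R : rcfType} (m d : nat) (u : 'I_(2 ^ m) -> 'I_d -> R)
  (j : nat) (t : 'I_(2 ^ m)) (i : 'I_d) : R :=
  \sum_(l < 2 ^ (m - j)) haar_coef u j l i * haarn j l t.

Definition Sbar_scale {R : rcfType} (m d : nat) (u : 'I_(2 ^ m) -> 'I_d -> R)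
  (j : nat) : R :=
  \sum_(t < 2 ^ m) norm2 (detail u j t).

Definition umean {R : rcfType} (m d : nat) (u : 'I_(2 ^ m) -> 'I_d -> R)
  (i : 'I_d) : R :=
  (2 ^+ m)^-1 * \sum_(t < 2 ^ m) u t i.

Definition Sbar {R : rcfType} (m d : nat) (u : 'I_(2 ^ m) -> 'I_d -> R) : R :=
  \sum_(t < 2 ^ m) norm2 (fun i => u t i - umean u i).

(* Main.v *)
Require Import Defs.
From HB Require Import structures.
From mathcomp Require Import all_boot all_order all_algebra.
From mathcomp Require Import ring lra zify.
Import Order.TTheory GRing.Theory Num.Theory.
Local Open Scope ring_scope.

Section N.
Variables (R : rcfType) (d : nat).
Implicit Types x y : 'I_d -> R.

Lemma norm2_ext x y : (forall i, x i = y i) -> norm2 x = norm2 y.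
Proof. by move=> H; rewrite /norm2; congr Num.sqrt; apply: eq_bigr => i _; rewrite H. Qed.

Lemma norm2_ge0 x : 0 <= norm2 x.
Proof. exact: sqrtr_ge0. Qed.

Lemma sumsq_ge0 x : 0 <= \sum_(i < d) x i ^+ 2.
Proof. by apply: sumr_ge0 => i _; rewrite sqr_ge0. Qed.

Lemma norm2_scale (c : R) x : norm2 (fun i => c * x i) = `|c| * norm2 x.
Proof.
rewrite /norm2 -sqrtr_sqr -sqrtrM ?sqr_ge0 //; congr Num.sqrt.
by rewrite mulr_sumr; apply: eq_bigr => i _; rewrite exprMn.
Qed.

Lemma norm2_sq x : norm2 x ^+ 2 = \sum_(i < d) x i ^+ 2.
Proof. by rewrite sqr_sqrtr // sumsq_ge0. Qed.

Lemma zero_of_sum x : \sum_(i < d) x i ^+ 2 = 0 -> forall i, x i = 0.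
Proof.
move=> H i; have := @psumr_eq0P _ _ xpredT (fun i => x i ^+ 2) (fun i _ => sqr_ge0 (x i)) H i isT.
by move/eqP; rewrite sqrf_eq0 => /eqP.
Qed.

Lemma cauchy x y : \sum_(i < d) x i * y i <= norm2 x * norm2 y.
Proof.
set A := norm2 x; set B := norm2 y.
have hA : 0 <= A := norm2_ge0 x. have hB : 0 <= B := norm2_ge0 y.
have key : 2 * (A * B) * (\sum_(i < d) x i * y i) <= 2 * (A * B) ^+ 2.
  have -> : 2 * (A * B) ^+ 2 = \sum_(i < d) (x i ^+ 2 * B ^+ 2 + y i ^+ 2 * A ^+ 2).
    rewrite big_split /= -!mulr_suml -/(norm2 _) -!norm2_sq -/A -/B; ring.
  rewrite mulr_sumr; apply: ler_sum => i _.
  have : 0 <= (x i * B - y i * A) ^+ 2 by rewrite sqr_ge0.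
  nra.
have [hAB|hAB] := eqVneq (A * B) 0.
  have [hA0|hB0] : A = 0 \/ B = 0.
    by move/eqP: hAB; rewrite mulf_eq0 => /orP [] /eqP; [left|right].
  - have h0 : forall i, x i = 0 by apply: zero_of_sum; rewrite -norm2_sq -/A hA0 expr0n.
    rewrite hAB big1 // => i _; by rewrite h0 mul0r.
  - have h0 : forall i, y i = 0 by apply: zero_of_sum; rewrite -norm2_sq -/B hB0 expr0n.
    rewrite hAB big1 // => i _; by rewrite h0 mulr0.
have pAB : 0 < A * B by rewrite lt_def hAB mulr_ge0.
move: key pAB; set S := \sum_(i < d) _; set P := A * B; nra.
Qed.

Lemma norm2_add x y : norm2 (fun i => x i + y i) <= norm2 x + norm2 y.
Proof.
have hs : 0 <= norm2 x + norm2 y by rewrite addr_ge0 ?norm2_ge0.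
rewrite -(ger0_norm hs) -sqrtr_sqr /norm2 ler_sqrt ?sqr_ge0 //.
rewrite -/(norm2 x) -/(norm2 y) sqrrD !norm2_sq.
have -> : \sum_(i < d) (x i + y i) ^+ 2 =
   \sum_(i < d) x i ^+ 2 + 2 * \sum_(i < d) x i * y i + \sum_(i < d) y i ^+ 2.
  rewrite mulr_sumr -!big_split /=; apply: eq_bigr => i _; ring.
have := cauchy x y. rewrite mulr_natl; lra.
Qed.

Lemma norm2_opp x : norm2 (fun i => - x i) = norm2 x.
Proof.
rewrite (@norm2_ext _ (fun i => (-1) * x i)); last by move=> i; rewrite mulN1r.
by rewrite norm2_scale normrN1 mul1r.
Qed.

Lemma norm2_sub x y : norm2 (fun i => x i - y i) <= norm2 x + norm2 y.
Proof. by rewrite -(norm2_opp y); apply: norm2_add. Qed.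

Lemma norm2_sum (r : seq nat) (x : nat -> 'I_d -> R) :
  norm2 (fun i => \sum_(s <- r) x s i) <= \sum_(s <- r) norm2 (x s).
Proof.
elim: r => [|a r IH].
  rewrite big_nil (@norm2_ext _ (fun i => 0 * 0)); last by move=> i; rewrite big_nil mul0r.
  by rewrite norm2_scale normr0 mul0r.
rewrite big_cons (@norm2_ext _ (fun i => x a i + \sum_(s <- r) x s i)); last by move=> i; rewrite big_cons.
by apply: le_trans (norm2_add _ _) _; rewrite lerD2l.
Qed.
End N.

Section S.
Variable R : rcfType.

Lemma sum_shift (F : nat -> R) a K :
  \sum_(a <= t < (a + K)%N) F t = \sum_(0 <= s < K) F (a + s)%N.
Proof.
rewrite -{1}(add0n a) big_addn addKn; apply: eq_bigr => i _; by rewrite addnC.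
Qed.

Lemma sum_blocks (F : nat -> R) M K :
  \sum_(0 <= t < (M * K)%N) F t = \sum_(0 <= l < M) \sum_(0 <= s < K) F (l * K + s)%N.
Proof.
elim: M => [|M IH]; first by rewrite mul0n !big_geq.
rewrite mulSnr big_nat_recr //= -IH (@big_cat_nat _ _ _ (M * K)) ?leq_addr //=.
by congr (_ + _); rewrite sum_shift.
Qed.

Lemma sum_halves (F : nat -> R) h :
  \sum_(0 <= s < (h + h)%N) F s = \sum_(0 <= s < h) F s + \sum_(0 <= s < h) F (h + s)%N.
Proof. by rewrite (@big_cat_nat _ _ _ h) ?leq_addr //=; congr (_ + _); rewrite sum_shift. Qed.

Lemma sum_blocks' (F : nat -> R) N M K : N = (M * K)%N ->
  \sum_(0 <= t < N) F t = \sum_(0 <= l < M) \sum_(0 <= s < K) F (l * K + s)%N.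
Proof. by move->; apply: sum_blocks. Qed.

Lemma sum_halves' (F : nat -> R) K h : K = (h + h)%N ->
  \sum_(0 <= s < K) F s = \sum_(0 <= s < h) F s + \sum_(0 <= s < h) F (h + s)%N.
Proof. by move->; apply: sum_halves. Qed.

Lemma sum_ordE n (F : 'I_n -> R) (G : nat -> R) :
  (forall t : 'I_n, F t = G t) -> \sum_(t < n) F t = \sum_(0 <= t < n) G t.
Proof. by move=> H; rewrite big_mkord; apply: eq_bigr => t _. Qed.

Lemma haar_blk j l l' s : (s < 2 ^ j.+1)%N ->
  haar j.+1 l (l' * 2 ^ j.+1 + s)%N =
  (if l == l' then (if (s < 2 ^ j)%N then 1 else -1) else 0 : R).
Proof.
move=> hs; rewrite /haar; change (j.+1.-1) with j; rewrite expnS in hs *; set p := (2 ^ j)%N in hs *.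
case: (ltngtP l l') => H.
- have : (2 * p * l.+1 <= l' * (2 * p))%N by rewrite mulnC leq_mul2r H orbT.
  move=> H2; rewrite ifF; last by apply/negbTE; rewrite negb_and -!leqNgt; apply/orP; right; lia.
  rewrite ifF //; apply/negbTE; rewrite negb_and -!leqNgt; apply/orP; right; lia.
- have : (l'.+1 * (2 * p) <= 2 * p * l)%N by rewrite mulnC leq_mul2l H orbT.
  move=> H2; rewrite ifF; last by apply/negbTE; rewrite negb_and -!leqNgt; apply/orP; left; lia.
  rewrite ifF //; apply/negbTE; rewrite negb_and -!leqNgt; apply/orP; left; lia.
- subst l'; rewrite /= (mulnC l).
  case: ifP => H1; case: ifP => H2 //; try lia.
  by case: ifP => //; lia.
Qed.
End S.

Theorem lemma8 (R : rcfType) (m d : nat) (hd : (1 <= d)%N)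
  (u : 'I_(2 ^ m) -> 'I_d -> R) (j : nat) (hj : (1 <= j <= m)%N) :
  Sbar_scale u j <= Sbar u.
Proof.
case: j hj => [|j] hj; first by [].
set K := (2 ^ j.+1)%N; set h := (2 ^ j)%N; set M := (2 ^ (m - j.+1))%N.
have hK : K = (h + h)%N by rewrite /K expnS mul2n addnn.
have hN : (2 ^ m)%N = (M * K)%N.
  by rewrite /M /K -expnD subnK //; case/andP: hj.
have N0 : (0 < 2 ^ m)%N by rewrite expn_gt0.
pose t0 := Ordinal N0.
pose U t i := u (insubd t0 t) i.
have hU : forall (t : 'I_(2 ^ m)) i, U t i = u t i by move=> t i; rewrite /U valKd.
pose q := Num.sqrt (2 ^+ j.+1 : R).
have hq : q * q = K%:R.
  by rewrite -expr2 sqr_sqrtr ?exprn_ge0 // /K natrX.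
have hK0 : K%:R != 0 :> R by rewrite pnatr_eq0 -lt0n expn_gt0.
have hq0 : q != 0 by apply: contraNneq hK0 => q0; rewrite -hq q0 mul0r.
pose D l i := \sum_(0 <= s < h) (U (l * K + s)%N i - U (l * K + (h + s))%N i).
have hsK : forall s, (s < h)%N -> (s < K)%N /\ (h + s < K)%N.
  move=> s hs; rewrite hK; lia.
have coefE : forall l, (l < M)%N -> forall i, haar_coef u j.+1 l i = D l i / q.
  move=> l hl i.
  rewrite /haar_coef (@sum_ordE _ _ _ (fun t => haarn j.+1 l t * U t i)); last first.
    by move=> t; rewrite hU.
  rewrite (@sum_blocks' _ _ _ _ _ hN) big_mkord (bigD1 (Ordinal hl)) //= [X in _ + X]big1; last first.
    move=> l' Hl'; rewrite (@eq_big_nat _ _ _ 0 K _ (fun _ => 0)) ?big1_eq // => s /andP[_ hs].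
    rewrite /haarn haar_blk //.
    have -> : (l == l') = false.
      by apply/negbTE; apply: contra Hl' => /eqP E; apply/eqP; apply: val_inj.
    by rewrite mul0r mul0r.
  rewrite addr0 (@sum_halves' _ _ _ _ hK) /D sumrB mulrBl !mulr_suml -sumrN.
  congr (_ + _); apply: eq_big_nat => s /andP[_ hs]; have [h1 h2] := hsK s hs;
    rewrite /haarn haar_blk ?eqxx //.
    by rewrite hs mul1r mulrC.
  rewrite ifF; last by apply/negbTE; rewrite -leqNgt /h; lia.
  by rewrite mulNr mul1r mulNr mulrC.
pose Dt t i := \sum_(l < 2 ^ (m - j.+1)) haar_coef u j.+1 l i * haarn j.+1 l t.
have detailE : forall l' s, (l' < M)%N -> (s < K)%N -> forall i,
    Dt (l' * K + s)%N i = ((if (s < h)%N then 1 else -1) / K%:R) * D l' i.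
  move=> l' s hl' hs i.
  rewrite /Dt (bigD1 (Ordinal hl')) //= big1 ?addr0; last first.
    move=> l Hl; rewrite /haarn haar_blk //.
    have -> : (val l == l') = false.
      by apply/negbTE; apply: contra Hl => /eqP E; apply/eqP; apply: val_inj.
    by rewrite mul0r mulr0.
  rewrite coefE // /haarn haar_blk // eqxx -hq.
  rewrite -/q -/h; set c := (if _ then _ else _); field; exact: hq0.
have hnK : forall s, `|((if (s < h)%N then 1 else -1) / K%:R : R)| = K%:R^-1.
  move=> s; rewrite normrM normrV ?unitfE // normr_nat.
  by case: ifP; rewrite ?normrN normr1 mul1r.
have LHS : Sbar_scale u j.+1 = \sum_(0 <= l < M) norm2 (D l).
  rewrite /Sbar_scale (@sum_ordE _ _ _ (fun t => norm2 (Dt t))) //.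
  rewrite (@sum_blocks' _ _ _ _ _ hN); apply: eq_big_nat => l /andP[_ hl].
  rewrite (@eq_big_nat _ _ _ 0 K _ (fun _ => K%:R^-1 * norm2 (D l))); last first.
    move=> s /andP[_ hs]; rewrite (@norm2_ext _ _ _ _ (detailE l s hl hs)) norm2_scale hnK //.
  by rewrite sumr_const_nat subn0 -mulrnAl -(mulr_natl (K%:R)^-1 K) mulfV // mul1r.
pose V t i := U t i - umean u i.
have RHS : Sbar u = \sum_(0 <= l < M) \sum_(0 <= s < K) norm2 (V (l * K + s)%N).
  rewrite /Sbar (@sum_ordE _ _ _ (fun t => norm2 (V t))); last first.
    by move=> t; apply: (@norm2_ext R d) => i; rewrite /V hU.
  by rewrite (@sum_blocks' _ _ _ _ _ hN).
rewrite LHS RHS; apply: ler_sum => l _.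
rewrite (@sum_halves' _ _ _ _ hK).
rewrite (@norm2_ext _ _ (D l) (fun i => \sum_(s <- index_iota 0 h) (V (l * K + s)%N i - V (l * K + (h + s))%N i))); last first.
  by move=> i; rewrite /D; apply: eq_bigr => s _; rewrite /V; ring.
apply: le_trans (norm2_sum _ _ _ _) _.
rewrite -big_split /=; apply: ler_sum => s _; exact: norm2_sub.
Qed.
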